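(* Let $q$ be a positive integer and $\varepsilon\in(0,1]$ such that $q^\varepsilon$ is an integer. Then there is a function $g:\mathbb N\to\mathbb R$ with $g(n)=o(n)$ such that for every positive integer $n$, the tensor $\langle q,q^\varepsilon,q\rangle^{\otimes n}$ has a zeroing out which is an independent tensor with at least $q^{(1+\varepsilon)n-g(n)}$ nonzero coefficients.
   Context: A tensor over finite sets of formal variables $X,Y,Z$ is a trilinear form $\sum T_{xyz}\,xyz$ with field coefficients. $\langle n,m,k\rangle=\sum_{i=1}^n\sum_{j=1}^m\sum_{l=1}^k x_{ij}y_{jl}z_{li}$. $A^{\otimes n}$ denotes the $n$-fold tensor power: the tensor over $X^n,Y^n,Z^n$ whose coefficient on $(x^{(1)},\dots,x^{(n)})(y^{(1)},\dots,y^{(n)})(z^{(1)},\dots,z^{(n)})$ is $\prod_t A_{x^{(t)}y^{(t)}z^{(t)}}$. For tensors $A,B$ over $X,Y,Z$, $A$ is a zeroing out of $B$ if each $A_{xyz}\in\{B_{xyz},0\}$ and there are functions $a:X\to\mathbb Z_{\ge0}$, $b:Y\to\mathbb Z_{\ge0}$, $c:Z\to\mathbb Z_{\ge0}$ such that whenever $B_{xyz}\ne0$, $A_{xyz}\ne 0$ iff $a(x)+b(y)+c(z)=0$. A tensor is independent if any two distinct triples $(x,y,z),(x',y',z')$ with nonzero coefficients satisfy $x\ne x'$, $y\ne y'$ and $z\ne z'$. *)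

(* Defs.v *)
From HB Require Import structures.
From mathcomp Require Import all_boot all_order all_algebra.
From mathcomp Require Import all_classical all_reals all_analysis.
Set Implicit Arguments. Unset Strict Implicit. Unset Printing Implicit Defensive.
Import Order.TTheory GRing.Theory Num.Theory.
Local Open Scope ring_scope.

(* A tensor over finite sets of variables X, Y, Z with coefficients in F:
   T x y z is the coefficient of the monomial x y z. *)
Definition tensor (F : fieldType) (X Y Z : finType) := X -> Y -> Z -> F.

(* <n,m,k> = sum_{i<n, j<m, l<k} x_{ij} y_{jl} z_{li}, with
   X = [n] x [m], Y = [m] x [k], Z = [k] x [n]. *)
Definition mmt (F : fieldType) (n m k : nat) :
  tensor F ('I_n * 'I_m)%type ('I_m * 'I_k)%type ('I_k * 'I_n)%type :=
  fun x y z => ((x.2 == y.1) && (y.2 == z.1) && (z.2 == x.1))%:R.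

Arguments mmt F n m k : clear implicits.

Definition tpow (F : fieldType) (X Y Z : finType) (A : tensor F X Y Z) (n : nat) :
  tensor F {ffun 'I_n -> X} {ffun 'I_n -> Y} {ffun 'I_n -> Z} :=
  fun x y z => \prod_(t < n) A (x t) (y t) (z t).

Definition zeroing_out (F : fieldType) (X Y Z : finType) (A B : tensor F X Y Z) : Prop :=
  (forall x y z, A x y z = B x y z \/ A x y z = 0) /\
  exists (a : X -> nat) (b : Y -> nat) (c : Z -> nat),
    forall x y z, B x y z != 0 -> (A x y z != 0 <-> (a x + b y + c z = 0)%N).

Definition independent (F : fieldType) (X Y Z : finType) (A : tensor F X Y Z) : Prop :=
  forall x y z x' y' z', A x y z != 0 -> A x' y' z' != 0 ->
    (x, y, z) <> (x', y', z') -> [/\ x <> x', y <> y' & z <> z'].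

Definition nnz (F : fieldType) (X Y Z : finType) (A : tensor F X Y Z) : nat :=
  #|[set t : (X * Y * Z)%type | A t.1.1 t.1.2 t.2 != 0]|.
Arguments tpow F X Y Z A n : clear implicits.

(* Main.v *)
Require Import Defs.
From HB Require Import structures.
From mathcomp Require Import all_boot all_order all_algebra.
From mathcomp Require Import all_classical all_reals all_analysis.
From mathcomp Require Import zify ring lra.
Import Order.TTheory GRing.Theory Num.Theory.
Set Implicit Arguments. Unset Strict Implicit. Unset Printing Implicit Defensive.

Lemma enc_lt (B L : nat) (F : 'I_L -> nat) :
  (forall i, F i < B) -> \sum_(i < L) F i * B ^ i < B ^ L.
Proof.
elim: L F => [|L IH] F HF; first by rewrite big_ord0 expn0.
rewrite big_ord_recr /=.
have := IH (fun i => F (widen_ord (leqnSn L) i)) (fun i => HF _).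
have := HF ord_max. rewrite /= expnS.
set S := \sum_(i < L) _. set X := B ^ L. move=> h1 h2. nia.
Qed.

Lemma divmod_uniq (a b a' b' X : nat) : a < X -> a' < X ->
  a + b * X = a' + b' * X -> a = a' /\ b = b'.
Proof.
move=> ha ha' e.
have hb : b = b'.
  case: (ltngtP b b') => // h; nia.
subst; lia.
Qed.

Lemma enc_inj (B L : nat) (F G : 'I_L -> nat) :
  (forall i, F i < B) -> (forall i, G i < B) ->
  \sum_(i < L) F i * B ^ i = \sum_(i < L) G i * B ^ i -> F =1 G.
Proof.
elim: L F G => [|L IH] F G HF HG; first by move=> _ [].
rewrite !big_ord_recr /= => e.
have [e1 e2] := divmod_uniq (enc_lt (fun i => HF (widen_ord (leqnSn L) i)))
   (enc_lt (fun i => HG (widen_ord (leqnSn L) i))) e.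
have IH' := IH _ _ (fun i => HF _) (fun i => HG _) e1.
move=> i. case: (ltnP i L) => hi.
  have -> : i = widen_ord (leqnSn L) (Ordinal hi) by apply: val_inj.
  exact: IH'.
have -> : i = ord_max by apply: val_inj => /=; have := ltn_ord i; lia.
exact: e2.
Qed.

Definition enc (h L B : nat) (v : {ffun 'I_L -> 'I_h}) : nat :=
  \sum_(i < L) (v i : nat) * B ^ i.
Definition sq (h L : nat) (v : {ffun 'I_L -> 'I_h}) : nat :=
  \sum_(i < L) (v i : nat) ^ 2.
Definition isD (h L B r d : nat) : bool :=
  [exists v : {ffun 'I_L -> 'I_h}, (sq v == r) && (enc B v == d)].

Lemma sum_eq_le (L : nat) (f g : 'I_L -> nat) :
  (forall i, f i <= g i) -> \sum_i f i = \sum_i g i -> forall i, f i = g i.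
Proof.
move=> le e i.
have e2 : \sum_i g i = \sum_i f i + \sum_i (g i - f i).
  rewrite -big_split; apply: eq_bigr => j _; have := le j; rewrite /=; lia.
have : \sum_i (g i - f i) == 0 by rewrite e in e2; lia.
rewrite sum_nat_eq0 => /forallP/(_ i); have := le i; lia.
Qed.

Lemma enc_lt' h L B (v : {ffun 'I_L -> 'I_h}) : h <= B -> enc B v < B ^ L.
Proof. move=> hB; apply: enc_lt => i; exact: leq_trans (ltn_ord _) hB. Qed.

Lemma enc_inj' h L B (u v : {ffun 'I_L -> 'I_h}) : h <= B -> enc B u = enc B v -> u = v.
Proof.
move=> hB e; apply/ffunP => i; apply: val_inj.
apply: (enc_inj (B:=B) (F := fun i => (u i : nat)) (G := fun i => (v i : nat))) => //.
- move=> j; exact: leq_trans (ltn_ord _) hB.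
- move=> j; exact: leq_trans (ltn_ord _) hB.
Qed.

Lemma sq_ineq (a b : nat) : (a + b) ^ 2 <= 2 * (a ^ 2 + b ^ 2).
Proof.
case: (leqP a b) => h.
  have [k ->] : exists k, b = a + k by exists (b - a); lia.
  nia.
have [k ->] : exists k, a = b + k by exists (a - b); lia.
nia.
Qed.

Lemma sq_eqE (a b : nat) : (a + b) ^ 2 = 2 * (a ^ 2 + b ^ 2) -> a = b.
Proof.
case: (leqP a b) => h.
  have [k ->] : exists k, b = a + k by exists (b - a); lia.
  nia.
have [k ->] : exists k, a = b + k by exists (a - b); lia.
nia.
Qed.

Lemma noAP h L B r d1 d2 d3 : 2 * h <= B ->
  isD h L B r d1 -> isD h L B r d2 -> isD h L B r d3 -> d1 + d2 = 2 * d3 -> d1 = d2.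
Proof.
move=> hB /existsP[u /andP[/eqP su /eqP eu]] /existsP[w /andP[/eqP sw /eqP ew]]
  /existsP[v /andP[/eqP sv /eqP ev]] e.
have dig : forall i, (u i : nat) + w i = 2 * v i.
  apply: (enc_inj (B:=B) (F := fun i => (u i : nat) + w i) (G := fun i => 2 * (v i : nat))).
  - move=> i; have := ltn_ord (u i); have := ltn_ord (w i); lia.
  - move=> i; have := ltn_ord (v i); lia.
  rewrite (eq_bigr (fun i => (u i : nat) * B ^ i + (w i : nat) * B ^ i)); last by move=> i _; rewrite mulnDl.
  transitivity (\sum_i ((u i : nat) * B ^ i + (w i : nat) * B ^ i)).
    by apply: eq_bigr => i _ /=; nia.
  transitivity (2 * \sum_i ((v i : nat) * B ^ i)); last first.
    by rewrite big_distrr; apply: eq_bigr => i _ /=; nia.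
  rewrite big_split /=.
  by move: eu ew ev; rewrite /enc => -> -> ->.
have sq_eq : forall i, (((u i : nat) + w i) ^ 2 = 2 * ((u i : nat) ^ 2 + (w i : nat) ^ 2)).
  apply: sum_eq_le.
  - move=> i; exact: sq_ineq.
  rewrite (eq_bigr (fun i => 4 * (v i : nat) ^ 2)); last by move=> i _; rewrite dig; nia.
  rewrite -big_distrr -big_distrr big_split /=.
  by move: su sw sv; rewrite /sq => -> -> ->; lia.
have uw : u = w.
  apply/ffunP => i; apply: val_inj; exact: sq_eqE (sq_eq i).
by rewrite -eu -ew uw.
Qed.

Lemma pigeon h L : 0 < h -> exists r, h ^ L <= #|[set v : {ffun 'I_L -> 'I_h} | sq v == r]| * (L * h ^ 2).+1.
Proof.
move=> h0.
set N := (L * h ^ 2).+1.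
have sqlt : forall v : {ffun 'I_L -> 'I_h}, sq v < N.
  move=> v; rewrite /N ltnS /sq.
  have -> : L * h ^ 2 = \sum_(i < L) h ^ 2 by rewrite sum_nat_const card_ord.
  apply: leq_sum => i _; have := ltn_ord (v i); nia.
have tot : h ^ L = \sum_(j < N) #|[set v : {ffun 'I_L -> 'I_h} | sq v == j]|.
  have -> : h ^ L = #|{ffun 'I_L -> 'I_h}| by rewrite card_ffun !card_ord.
  rewrite -sum1_card.
  rewrite (partition_big (fun v => Ordinal (sqlt v)) xpredT) //=.
  apply: eq_bigr => j _; rewrite -sum1_card; apply: eq_bigl => v.
  by rewrite !inE -val_eqE.
have Npos : 0 < #|'I_N| by rewrite card_ord.
have [j0 hj0] := @bigop.eq_bigmax 'I_N (fun j => #|[set v : {ffun 'I_L -> 'I_h} | sq v == j]|) Npos.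
exists (val j0); rewrite tot -hj0.
rewrite -[X in _ <= _ * X](card_ord N) mulnC -sum_nat_const.
by apply: leq_sum => j _; apply: bigop.leq_bigmax.
Qed.

Definition rk (T : finType) (x : T) : nat := index x (enum T).
Definition dc (T : finType) (x0 : T) (a : nat) : T := nth x0 (enum T) a.

Lemma rk_lt (T : finType) (x : T) : (rk x < #|T|)%N.
Proof. by rewrite /rk fintype.cardE index_mem fintype.mem_enum. Qed.

Lemma rk_inj (T : finType) : injective (@rk T).
Proof.
move=> x y e; rewrite -(nth_index x (fintype.mem_enum T x)) -(nth_index x (fintype.mem_enum T y)).
by rewrite -/(rk x) -/(rk y) e.
Qed.

Lemma rk_dc (T : finType) (x0 : T) a : (a < #|T|)%N -> rk (dc x0 a) = a.
Proof. by move=> h; rewrite /rk /dc index_uniq // -?fintype.cardE // fintype.enum_uniq. Qed.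

Section Tens.
End Tens.

Definition fst_ff (A B : finType) (n : nat) (x : {ffun 'I_n -> A * B}) : {ffun 'I_n -> A} :=
  [ffun t => (x t).1].
Definition snd_ff (A B : finType) (n : nat) (x : {ffun 'I_n -> A * B}) : {ffun 'I_n -> B} :=
  [ffun t => (x t).2].
Definition pair_ff (A B : finType) (n : nat) (u : {ffun 'I_n -> A}) (v : {ffun 'I_n -> B}) :
  {ffun 'I_n -> A * B} := [ffun t => (u t, v t)].

Lemma fst_pair (A B : finType) n (u : {ffun 'I_n -> A}) (v : {ffun 'I_n -> B}) :
  fst_ff (pair_ff u v) = u.
Proof. by apply/ffunP => t; rewrite !ffunE. Qed.
Lemma snd_pair (A B : finType) n (u : {ffun 'I_n -> A}) (v : {ffun 'I_n -> B}) :
  snd_ff (pair_ff u v) = v.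
Proof. by apply/ffunP => t; rewrite !ffunE. Qed.
Lemma pair_fst_snd (A B : finType) n (x : {ffun 'I_n -> A * B}) :
  pair_ff (fst_ff x) (snd_ff x) = x.
Proof. by apply/ffunP => t; rewrite !ffunE; case: (x t). Qed.

Lemma natb_neq0 (F : fieldType) (b : bool) : (b%:R != 0 :> F)%R -> b.
Proof. by case: b; rewrite ?eqxx. Qed.

Lemma tpow_neq0 (F : fieldType) n q p x y z :
  tpow F _ _ _ (mmt F q p q) n x y z != 0%R <->
  [/\ snd_ff x = fst_ff y, snd_ff y = fst_ff z & snd_ff z = fst_ff x].
Proof.
rewrite /tpow; split.
  move/prodf_neq0 => H; split; apply/ffunP => t; rewrite !ffunE;
   have := H t isT; rewrite /mmt => /natb_neq0 /andP[/andP[/eqP ? /eqP ?] /eqP ?] //.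
case=> /ffunP e1 /ffunP e2 /ffunP e3; apply/prodf_neq0 => t _ /=; rewrite /mmt.
have := e1 t; have := e2 t; have := e3 t.
rewrite !ffunE => -> -> ->; rewrite !eqxx /=; exact: oner_neq0.
Qed.

Definition Adef (F : fieldType) n q p (Xp Yp Zp : nat -> nat -> bool) :
  tensor F {ffun 'I_n -> ('I_q * 'I_p)%type} {ffun 'I_n -> ('I_p * 'I_q)%type}
           {ffun 'I_n -> ('I_q * 'I_q)%type} :=
  fun x y z => if [&& Xp (rk (fst_ff x)) (rk (snd_ff x)), Yp (rk (fst_ff y)) (rk (snd_ff y))
                    & Zp (rk (fst_ff z)) (rk (snd_ff z))]
               then tpow F _ _ _ (mmt F q p q) n x y z else 0%R.

Lemma Adef_zero (F : fieldType) n q p Xp Yp Zp :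
  zeroing_out (@Adef F n q p Xp Yp Zp) (tpow F _ _ _ (mmt F q p q) n).
Proof.
split.
  by move=> x y z; rewrite /Adef; case: ifP => _; [left|right].
exists (fun x => nat_of_bool (~~ Xp (rk (fst_ff x)) (rk (snd_ff x)))).
exists (fun y => nat_of_bool (~~ Yp (rk (fst_ff y)) (rk (snd_ff y)))).
exists (fun z => nat_of_bool (~~ Zp (rk (fst_ff z)) (rk (snd_ff z)))).
move=> x y z nz; rewrite /Adef.
case: (Xp _ _); case: (Yp _ _); case: (Zp _ _) => //=; split => //; by rewrite eqxx.
Qed.

Lemma Adef_decomp (F : fieldType) n q p Xp Yp Zp x y z :
  @Adef F n q p Xp Yp Zp x y z != 0%R ->
  exists i j k, [/\ x = pair_ff i j, y = pair_ff j k, z = pair_ff k i &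
     [&& Xp (rk i) (rk j), Yp (rk j) (rk k) & Zp (rk k) (rk i)]].
Proof.
rewrite /Adef; case: ifP; last by rewrite eqxx.
move=> c /tpow_neq0 [e1 e2 e3].
exists (fst_ff x), (snd_ff x), (snd_ff y); split.
- by rewrite pair_fst_snd.
- by rewrite e1 pair_fst_snd.
- by rewrite e2 -e3 pair_fst_snd.
by move: c; rewrite e1 e2 e3.
Qed.

Lemma pair_inj (A B : finType) n (u u' : {ffun 'I_n -> A}) (v v' : {ffun 'I_n -> B}) :
  pair_ff u v = pair_ff u' v' -> u = u' /\ v = v'.
Proof. by move=> e; move: (congr1 (@fst_ff A B n) e) (congr1 (@snd_ff A B n) e); rewrite !fst_pair !snd_pair. Qed.

Lemma Adef_indep (F : fieldType) n q p (Xp Yp Zp : nat -> nat -> bool) :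
  (forall a b c a' b' c', [&& Xp a b, Yp b c & Zp c a] -> [&& Xp a' b', Yp b' c' & Zp c' a'] ->
     [/\ a = a' -> b = b' -> c = c', b = b' -> c = c' -> a = a' & c = c' -> a = a' -> b = b']) ->
  independent (@Adef F n q p Xp Yp Zp).
Proof.
move=> U x y z x' y' z' /Adef_decomp [i [j [k [-> -> -> T]]]]
  /Adef_decomp [i' [j' [k' [-> -> -> T']]]] ne.
have [U1 U2 U3] := U _ _ _ _ _ _ T T'.
split => /pair_inj [e1 e2]; apply: ne; subst.
- by rewrite (rk_inj (U1 erefl erefl)).
- by rewrite (rk_inj (U2 erefl erefl)).
- by rewrite (rk_inj (U3 erefl erefl)).
Qed.

Lemma Adef_count (F : fieldType) n q p (Xp Yp Zp : nat -> nat -> bool)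
  (i0 : {ffun 'I_n -> 'I_q}) (j0 : {ffun 'I_n -> 'I_p})
  (U : finType) (S : {set U}) (f : U -> nat * nat * nat) :
  {in S &, injective f} ->
  (forall u, u \in S -> let: (a, b, c) := f u in
     [/\ (a < #|{ffun 'I_n -> 'I_q}|)%N, (b < #|{ffun 'I_n -> 'I_p}|)%N,
         (c < #|{ffun 'I_n -> 'I_q}|)%N & [&& Xp a b, Yp b c & Zp c a]]) ->
  (#|S| <= nnz (@Adef F n q p Xp Yp Zp))%N.
Proof.
move=> finj fS.
pose g u := let: (a, b, c) := f u in
  (pair_ff (dc i0 a) (dc j0 b), pair_ff (dc j0 b) (dc i0 c), pair_ff (dc i0 c) (dc i0 a)).
have ginj : {in S &, injective g}.
  move=> u u' hu hu'; have := fS u hu; have := fS u' hu'; rewrite /g.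
  move: (finj u u' hu hu'); case: (f u) => [[a b] c]; case: (f u') => [[a' b'] c'].
  move=> fi [ha' hb' hc' _] [ha hb hc _] [] /pair_inj [ea eb] /pair_inj [_ ec] _.
  apply: fi; move: (congr1 (@rk _) ea) (congr1 (@rk _) eb) (congr1 (@rk _) ec).
  by rewrite !rk_dc // => -> -> ->.
rewrite -(card_in_imset ginj) /nnz; apply: subset_leq_card.
apply/fintype.subsetP => t /imsetP [u hu ->]; rewrite inE.
have := fS u hu; rewrite /g; case: (f u) => [[a b] c] [ha hb hc T] /=.
rewrite /Adef !fst_pair !snd_pair !rk_dc // T.
apply/tpow_neq0; by rewrite !fst_pair !snd_pair.
Qed.

Definition Xp (P : nat) (D : nat -> bool) (a b : nat) := (a %% P <= b) && D (b - a %% P).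
Definition Yp (P : nat) (D : nat -> bool) (b c : nat) := (b <= c %% P) && D (c %% P - b).
Definition Zp (P : nat) (D : nat -> bool) (c a : nat) :=
  [&& c %/ P == a %/ P, a %% P <= c %% P, ~~ odd (c %% P - a %% P) & D ((c %% P - a %% P)./2)].

Lemma half_even (x : nat) : ~~ odd x -> x = 2 * x./2.
Proof. move=> h; have := odd_double_half x; move: h; case: (odd x) => //= _; rewrite -muln2; lia. Qed.

Lemma tri_props P (D : nat -> bool) a b c :
  (forall d1 d2 d3, D d1 -> D d2 -> D d3 -> d1 + d2 = 2 * d3 -> d1 = d2) ->
  [&& Xp P D a b, Yp P D b c & Zp P D c a] ->
  [/\ a %% P <= b, b - a %% P = c %% P - b, b <= c %% P & c %/ P = a %/ P].
Proof.
move=> noap /and3P [/andP [h1 d1] /andP [h2 d2] /and4P [/eqP h3 h4 h5 d3]].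
have e := half_even h5.
have := noap _ _ _ d1 d2 d3; split => //; lia.
Qed.

Lemma tri_uniq P (D : nat -> bool) :
  (forall d1 d2 d3, D d1 -> D d2 -> D d3 -> d1 + d2 = 2 * d3 -> d1 = d2) ->
  forall a b c a' b' c', [&& Xp P D a b, Yp P D b c & Zp P D c a] ->
     [&& Xp P D a' b', Yp P D b' c' & Zp P D c' a'] ->
     [/\ a = a' -> b = b' -> c = c', b = b' -> c = c' -> a = a' & c = c' -> a = a' -> b = b'].
Proof.
move=> noap a b c a' b' c' T T'.
have [h1 h2 h3 h4] := tri_props noap T.
have [h1' h2' h3' h4'] := tri_props noap T'.
have ea := divn_eq a P; have ec := divn_eq c P.
have ea' := divn_eq a' P; have ec' := divn_eq c' P.
split=> e1 e2; subst.
- rewrite ec ec' h4 h4'; lia.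
- rewrite ea ea' -h4 -h4'; lia.
- lia.
Qed.

Lemma divmodE (i s P : nat) : s < P -> (i * P + s) %/ P = i /\ (i * P + s) %% P = s.
Proof.
move=> hs; have P0 : 0 < P by lia.
by rewrite divnMDl // divn_small // addn0 modnMDl modn_small.
Qed.

Definition rsS (m M h L r : nat) : {set 'I_m * 'I_M * {ffun 'I_L -> 'I_h}} :=
  finset.setX [set: 'I_m * 'I_M] [set v : {ffun 'I_L -> 'I_h} | sq v == r].

Definition rsf (m M h L B P : nat) (u : 'I_m * 'I_M * {ffun 'I_L -> 'I_h}) : nat * nat * nat :=
  (u.1.1 * P + u.1.2, u.1.2 + enc B u.2, u.1.1 * P + (u.1.2 + 2 * enc B u.2)).

Lemma rsS_card m M h L r : #|rsS m M h L r| = m * M * #|[set v : {ffun 'I_L -> 'I_h} | sq v == r]|.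
Proof. by rewrite /rsS finset.cardsX finset.cardsT card_prod !card_ord. Qed.

Lemma rs_props (Q P m h L B r : nat) : m * P <= Q -> 2 * h <= B -> 3 * B ^ L <= P + 2 ->
  {in rsS m (B ^ L) h L r &, injective (rsf B P)} /\
  forall u, u \in rsS m (B ^ L) h L r ->
    let: (a, b, c) := rsf B P u in
     [/\ a < Q, b < P, c < Q &
       [&& Xp P (isD h L B r) a b, Yp P (isD h L B r) b c & Zp P (isD h L B r) c a]].
Proof.
move=> hQ hB hP.
have hhB : h <= B by lia.
have bnd : forall (s : 'I_(B ^ L)) (v : {ffun 'I_L -> 'I_h}), s + 2 * enc B v < P.
  move=> s v; have := enc_lt' v hhB; have := ltn_ord s; lia.
split.
  move=> [[i s] v] [[i' s'] v'] _ _ [] /=.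
  have := bnd s v; have := bnd s' v' => b1 b2.
  have [e1 e2] := divmodE i (ltn_trans (leq_ltn_trans (leq_addr _ _) b2) (ltnSn _)).
  move=> ea.
  have sP : s < P by lia.
  have sP' : s' < P by lia.
  have [ei es] := divmodE i sP; have [ei' es'] := divmodE i' sP'.
  have eii : (i : nat) = i' by rewrite -ei -ei' ea.
  have ess : (s : nat) = s' by rewrite -es -es' ea.
  move=> eb _.
  have ev : enc B v = enc B v' by lia.
  have -> := enc_inj' hhB ev.
  by congr (_, _, _); apply: val_inj.
move=> [[i s] v] hu /=.
move: hu; rewrite /rsS finset.in_setX !inE /= => hu.
have b1 := bnd s v.
have sP : s < P by lia.
have [ea1 ea2] := divmodE i sP.
have [ec1 ec2] := divmodE i b1.
have hi := ltn_ord i.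
have hiQ : (i.+1) * P <= Q by apply: leq_trans hQ; rewrite leq_mul2r hi orbT.
have De : isD h L B r (enc B v) by apply/existsP; exists v; rewrite hu eqxx.
split.
- lia.
- lia.
- lia.
rewrite /Xp /Yp /Zp ea1 ea2 ec1 ec2 !eqxx /=.
have -> : s + enc B v - s = enc B v by lia.
have -> : s + 2 * enc B v - (s + enc B v) = enc B v by lia.
have -> : s + 2 * enc B v - s = 2 * enc B v by lia.
have -> : (2 * enc B v)./2 = enc B v by rewrite mul2n doubleK.
rewrite De mul2n odd_double /= !andbT.
apply/and3P; split; lia.
Qed.

Lemma leq_expb a c e : a <= c -> a ^ e <= c ^ e.
Proof. by move=> h; elim: e => // e IH; rewrite !expnS leq_mul. Qed.

Lemma chain (q p n b L h B M m Q P Dc cnt : nat) :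
  Q = q ^ n -> P = p ^ n -> 1 < p -> p <= q -> B = p ^ b -> 1 <= b -> h = B %/ 2 ->
  L = (n - 2) %/ b -> M = B ^ L -> m = Q %/ P ->
  h ^ L <= Dc * (L * h ^ 2).+1 -> m * M * Dc <= cnt ->
  (q * p) ^ n <= cnt * q ^ (3 * L + 4 * b + 3).
Proof.
move=> HQ HP p1 pq HB b1 Hh HL HM Hm HD Hc.
have PQ : P <= Q by rewrite HQ HP; apply: leq_expb.
have P0 : 0 < P by rewrite HP expn_gt0; lia.
have X1 : Q <= 2 * m * P.
  have := divn_eq Q P; have := ltn_pmod Q P0; rewrite -Hm.
  have m1 : 1 <= m by rewrite Hm divn_gt0.
  nia.
have X2 : P <= M * p ^ b.+1.
  rewrite HP HM HB -expnM -expnD; apply: leq_pexp2l; first lia.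
  have := divn_eq (n - 2) b; have := ltn_pmod (n - 2) b1; rewrite -HL; nia.
have B2 : 2 <= B by rewrite HB; have := leq_pexp2l (ltnW p1) b1; rewrite expn1; lia.
have h1 : 1 <= h by rewrite Hh; lia.
have X3 : M <= 3 ^ L * h ^ L by rewrite HM -expnMn; apply: leq_expb; rewrite Hh; lia.
have X4 : (L * h ^ 2).+1 <= 2 ^ L * p ^ (2 * b).
  have hB : h ^ 2 <= p ^ (2 * b) by rewrite mulnC expnM -HB; apply: leq_expb; rewrite Hh; lia.
  have := ltn_expl L (isT : 1 < 2).
  nia.
have X5 : M <= Dc * (6 ^ L * p ^ (2 * b)).
  apply: (leq_trans X3); have -> : 6 = 3 * 2 by []. rewrite expnMn.
  have := leq_mul (leqnn (3 ^ L)) (leq_trans HD (leq_mul (leqnn Dc) X4)).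
  move=> H; apply: (leq_trans H); apply: eq_leq; ring.
have X6 : 2 * 6 ^ L * p ^ (4 * b + 2) <= q ^ (3 * L + 4 * b + 3).
  have q2 : 2 <= q by lia.
  have a1 : 6 ^ L <= (q ^ 3) ^ L.
    apply: leq_expb; have := leq_expb 3 q2; rewrite (_ : 2 ^ 3 = 8) //; lia.
  have a2 : p ^ (4 * b + 2) <= q ^ (4 * b + 2) by apply: leq_expb.
  have -> : 3 * L + 4 * b + 3 = 1 + 3 * L + (4 * b + 2) by lia.
  rewrite (expnD q (1 + 3 * L)) (expnD q 1 (3 * L)) (expnM q 3 L) expn1.
  apply: (leq_trans (leq_mul (leq_mul q2 a1) a2)); apply: eq_leq; ring.
rewrite expnMn -HQ -HP.
apply: (leq_trans (leq_mul X1 (leqnn P))).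
have Y : 2 * m * P * P <= 2 * m * (M * p ^ b.+1) * (M * p ^ b.+1).
  exact: leq_mul (leq_mul (leqnn _) X2) X2.
apply: (leq_trans Y).
have Y2 : 2 * m * (M * p ^ b.+1) * (M * p ^ b.+1) <= (m * M * Dc) * (2 * 6 ^ L * p ^ (4 * b + 2)).
  have -> : 2 * m * (M * p ^ b.+1) * (M * p ^ b.+1) = (2 * m * M * p ^ (2 * b.+1)) * M.
    by rewrite mulnC (mulnC 2 b.+1) expnM; ring.
  apply: (leq_trans (leq_mul (leqnn _) X5)).
  apply: eq_leq; have -> : 4 * b + 2 = 2 * b.+1 + 2 * b by lia.
  rewrite expnD; ring.
apply: (leq_trans Y2); apply: leq_mul => //.
Qed.

Definition bq (n : nat) : nat := \max_(k < n.+1 | k * k <= n) k.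

Lemma bq_sq n : bq n * bq n <= n.
Proof.
rewrite /bq; apply: (big_ind (fun x => x * x <= n)) => //.
move=> x y hx hy; rewrite /maxn; case: ifP.
by []. by [].
Qed.

Lemma bq_ge n K : K * K <= n -> K <= bq n.
Proof.
move=> h; have hK : K < n.+1 by nia.
exact: (@bigop.leq_bigmax_cond _ (fun k : 'I_n.+1 => k * k <= n) (fun k => nat_of_ord k) (Ordinal hK)).
Qed.

Definition Gf (n : nat) : nat := 3 * ((n - 2) %/ bq n) + 4 * bq n + 3.

Lemma Gf_bound n : 0 < n -> Gf n * bq n <= 10 * n.
Proof.
move=> n0; have b1 : 1 <= bq n by apply: bq_ge; lia.
have bb := bq_sq n.
have Lb : (n - 2) %/ bq n * bq n <= n - 2 by apply: leq_trunc_div.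
rewrite /Gf; nia.
Qed.

Lemma main_tensor (F : fieldType) (q p n : nat) : 1 < p -> p <= q -> 0 < n ->
  exists A : tensor F {ffun 'I_n -> ('I_q * 'I_p)%type} {ffun 'I_n -> ('I_p * 'I_q)%type}
                      {ffun 'I_n -> ('I_q * 'I_q)%type},
   [/\ zeroing_out A (tpow F _ _ _ (mmt F q p q) n), independent A &
       (q * p) ^ n <= nnz A * q ^ Gf n].
Proof.
move=> p1 pq n0.
have q0 : 0 < q by lia.
have p0 : 0 < p by lia.
set b := bq n.
have b1 : 1 <= b by apply: bq_ge; lia.
set B := p ^ b.
set h := B %/ 2.
set L := (n - 2) %/ b.
set M := B ^ L.
set Q := #|{ffun 'I_n -> 'I_q}|.
set P := #|{ffun 'I_n -> 'I_p}|.
have HQ : Q = q ^ n by rewrite /Q card_ffun !card_ord.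
have HP : P = p ^ n by rewrite /P card_ffun !card_ord.
set m := Q %/ P.
have B2 : 2 <= B by rewrite /B; have := leq_pexp2l p0 b1; rewrite expn1; lia.
have h0 : 0 < h by rewrite /h; lia.
have [r hr] := pigeon L h0.
have hmP : m * P <= Q by apply: leq_trunc_div.
have h2B : 2 * h <= B by rewrite /h; lia.
have h3 : 3 * B ^ L <= P + 2.
  have Lb : L * b <= n - 2 by apply: leq_trunc_div.
  case: (ltnP n 2) => hn.
    have -> : L = 0 by rewrite /L (_ : n - 2 = 0) ?div0n //; lia.
    have : 0 < P by rewrite HP expn_gt0 p0.
    by rewrite expn0; lia.
  have e1 : B ^ L <= p ^ (n - 2) by rewrite /B -expnM; apply: leq_pexp2l => //; lia.
  have e2 : P = p ^ (n - 2) * p ^ 2 by rewrite HP -expnD; congr (_ ^ _); lia.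
  have e3 : 4 <= p ^ 2 by have := leq_expb 2 p1.
  rewrite e2; nia.
have [finj fprops] := rs_props r hmP h2B h3.
set D := isD h L B r.
have noap : forall d1 d2 d3, D d1 -> D d2 -> D d3 -> d1 + d2 = 2 * d3 -> d1 = d2.
  by move=> d1 d2 d3; apply: noAP.
exists (@Adef F n q p (Xp P D) (Yp P D) (Zp P D)).
split.
- exact: Adef_zero.
- apply: Adef_indep; exact: tri_uniq noap.
have cnt := Adef_count F [ffun => Ordinal q0] [ffun => Ordinal p0] finj fprops.
rewrite rsS_card in cnt.
exact: (chain HQ HP p1 pq erefl b1 erefl erefl erefl erefl hr cnt).
Qed.


Lemma ffun11 n (x x' : {ffun 'I_n -> ('I_1 * 'I_1)%type}) : x = x'.
Proof.
apply/ffunP => t; case: (x t) => a b; case: (x' t) => c d.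
by rewrite (ord1 a) (ord1 b) (ord1 c) (ord1 d).
Qed.

Local Open Scope ring_scope.

Theorem mainTheorem3 (R : realType) (F : fieldType) (q : nat) (eps : R) (p : nat) :
  (0 < q)%N -> 0 < eps -> eps <= 1 ->
  p%:R = q%:R `^ eps ->
  exists g : nat -> R,
    (forall e : R, 0 < e -> exists N : nat, forall n : nat, (N <= n)%N ->
        `|g n| <= e * n%:R) /\
    forall n : nat, (0 < n)%N ->
      exists A : tensor F {ffun 'I_n -> ('I_q * 'I_p)%type} {ffun 'I_n -> ('I_p * 'I_q)%type}
                          {ffun 'I_n -> ('I_q * 'I_q)%type},
        [/\ zeroing_out A (tpow F _ _ _ (mmt F q p q) n), independent A &
            q%:R `^ ((1 + eps) * n%:R - g n) <= (nnz A)%:R].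
Proof.
move=> q0 eps0 eps1 hp.
exists (fun n => (Gf n)%:R).
split.
  move=> e e0.
  set K := (Num.truncn (10 / e)).+1.
  have hK : 10 / e < K%:R by exact: truncnS_gt.
  have K0 : (0 < K)%N by [].
  exists (K * K)%N => n hn.
  have n0 : (0 < n)%N by apply: leq_trans hn; rewrite muln_gt0 K0.
  have hb : (K <= bq n)%N := bq_ge hn.
  have hGK : (Gf n * K <= 10 * n)%N.
    by apply: leq_trans (Gf_bound n0); rewrite leq_mul2l hb orbT.
  rewrite normr_nat.
  have h1 : (Gf n)%:R * K%:R <= 10 * n%:R :> R.
    by rewrite -!natrM ler_nat.
  have h2 : 10 < e * K%:R.
    have e10 : e * (10 / e) = 10 by rewrite mulrCA divff ?mulr1 // gt_eqF.
    by rewrite -[X in X < _]e10 ltr_pM2l.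
  have KR : 0 < K%:R :> R by rewrite ltr0n.
  have nR : 0 <= n%:R :> R by [].
  nra.
move=> n n0.
case: (ltngtP q 1) => hq.
- lia.
- have qR : 1 < q%:R :> R by rewrite ltr1n.
  have qn0 : q%:R != 0 :> R by rewrite pnatr_eq0; lia.
  have p1 : (1 < p)%N.
    have pge : 1 <= p%:R :> R.
      rewrite hp -[X in X <= _](powRr0 q%:R); exact: (@ler_powR R q%:R (ltW qR) 0 eps (ltW eps0)).
    have pne : p%:R != 1 :> R.
      rewrite hp powR_eq1 negb_or negb_or; apply/and3P; split.
      + by rewrite gt_eqF.
      + by rewrite -leNgt ler0n.
      + by rewrite gt_eqF.
    move: pge pne; rewrite ler1n (_ : 1 = 1%:R) // eqr_nat; lia.
  have pq : (p <= q)%N.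
    by rewrite -(ler_nat R) hp; apply: ler1_powR => //; exact: ltW.
  have [A [hz hi hc]] := main_tensor F p1 pq n0.
  exists A; split => //.
  have e : q%:R `^ ((1 + eps) * n%:R - (Gf n)%:R) = (q%:R ^+ n * p%:R ^+ n) / q%:R ^+ Gf n :> R.
    rewrite powRB; last by rewrite qn0 implybT.
    rewrite mulrDl mul1r powRD; last by rewrite qn0 implybT.
    by rewrite powRrM -hp !powR_mulrn.
  rewrite e ler_pdivrMr; last by rewrite exprn_gt0 // ltr0n; lia.
  by rewrite -!natrX -!natrM ler_nat -expnMn.
- subst q.
  have p1 : p = 1%N.
    by apply/eqP; rewrite -(eqr_nat R) hp powR1.
  subst p.
  exists (tpow F _ _ _ (mmt F 1 1 1) n); split.
  + split; first by move=> *; left.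
    exists (fun=> 0%N), (fun=> 0%N), (fun=> 0%N) => x y z nz; split => //.
  + rewrite /independent => x1 y1 z1 x2 y2 z2 _ _ ne; exfalso; apply: ne.
    by rewrite (ffun11 x1 x2) (ffun11 y1 y2) (ffun11 z1 z2).
  + rewrite powR1 (_ : 1 = 1%:R) // ler_nat /nnz.
    pose x0 : {ffun 'I_n -> ('I_1 * 'I_1)%type} := [ffun => (ord0, ord0)].
    apply/card_gt0P; exists (x0, x0, x0); rewrite inE /=.
    by apply/tpow_neq0; split; apply/ffunP => t; rewrite !ffunE.
Qed.
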